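(* For every integer $n \geq 1$, \[ 2p(n) - 1 \;=\; \sum_{(a_1,\dots,a_k) \in \mathcal{A}(n)} \left\lfloor \frac{a_{k-1} + a_k}{a_{k-1} + 1} \right\rfloor, \] where $p(n)$ is the number of partitions of $n$.
   Context: An ascending composition of a positive integer $n$ is a finite sequence of positive integers $(a_1,\dots,a_k)$, $k\ge 1$, with $a_1+\dots+a_k=n$ and $a_1\le a_2\le\dots\le a_k$. $\mathcal{A}(n)$ denotes the set of all ascending compositions of $n$, so $|\mathcal{A}(n)| = p(n)$. By convention $a_0 = 0$ for every ascending composition, so for the one-part composition $(n)$ the summand is $\lfloor (0+n)/(0+1)\rfloor = n$. *)

(* Defs.v *)
From mathcomp Require Import all_boot.
Set Implicit Arguments. Unset Strict Implicit. Unset Printing Implicit Defensive.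

Definition is_asc_comp (n : nat) (s : seq nat) : bool :=
  [&& 0 < size s, all (fun a => 0 < a) s, sumn s == n & sorted leq s].

(* a_k (last part) and a_{k-1} with the convention a_0 = 0. *)
Definition last_part (s : seq nat) : nat := last 0 s.
Definition prev_part (s : seq nat) : nat := nth 0 (0 :: s) (size s).-1.

Definition summand (s : seq nat) : nat :=
  (prev_part s + last_part s) %/ (prev_part s).+1.

(* Main.v *)
Require Import Defs.
From mathcomp Require Import all_boot.
Set Implicit Arguments. Unset Strict Implicit. Unset Printing Implicit Defensive.

Definition F (s : seq nat) := (last_part s).-1 %/ (prev_part s).+1.

Definition phi (x : seq nat * nat) : seq nat :=
  let: (s, j) := x in
  take (size s).-2 s ++ nseq j (prev_part s).+1 ++
    [:: last_part s + prev_part s - j * (prev_part s).+1].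

Definition psi (t : seq nat) : seq nat * nat :=
  let u := take (size t).-1 t in
  let c := last 0 u in
  let j := count_mem c u in
  let p := filter (fun x => x < c) u in
  (p ++ (if c.-1 is 0 then [::] else [:: c.-1]) ++ [:: last 0 t + j * c - c.-1], j).

Lemma phi1 b j : phi ([:: b], j) = nseq j 1 ++ [:: b - j].
Proof. by rewrite /phi /= /last_part /prev_part /= addn0 muln1. Qed.

Lemma prev_rc p a b : prev_part (p ++ [:: a; b]) = a.
Proof.
rewrite /prev_part size_cat addn2 /= -/(nth 0 (p ++ [:: a; b]) (size p)) nth_cat ltnn subnn //.
Qed.

Lemma last_rc p a b : last_part (p ++ [:: a; b]) = b.
Proof. by rewrite /last_part last_cat. Qed.

Lemma phi2 p a b j :
  phi (p ++ [:: a; b], j) = p ++ nseq j a.+1 ++ [:: b + a - j * a.+1].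
Proof.
rewrite /phi prev_rc last_rc size_cat addn2 /= take_size_cat //.
Qed.

Lemma F1 b : F [:: b] = b.-1.
Proof. by rewrite /F /last_part /prev_part /= divn1. Qed.

Lemma F2 p a b : F (p ++ [:: a; b]) = b.-1 %/ a.+1.
Proof. by rewrite /F prev_rc last_rc. Qed.

Lemma psiE p j c d : all (fun x => x < c) p -> 0 < j ->
  psi (p ++ nseq j c ++ [:: d]) =
  (p ++ (if c.-1 is 0 then [::] else [:: c.-1]) ++ [:: d + j * c - c.-1], j).
Proof.
move=> Hp Hj.
have Hu : take (size (p ++ nseq j c ++ [:: d])).-1 (p ++ nseq j c ++ [:: d])
   = p ++ nseq j c.
  by rewrite catA take_size_cat // !size_cat /= addn1.
have Hc : last 0 (p ++ nseq j c) = c.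
  by case: (j) Hj => // k _; rewrite last_cat /=; elim: k => //.
have Hcnt : count_mem c (p ++ nseq j c) = j.
  rewrite count_cat count_nseq /= eqxx mul1n.
  have /count_memPn -> // : c \notin p.
  by apply/negP => /(allP Hp); rewrite ltnn.
have Hf : filter (fun x => x < c) (p ++ nseq j c) = p.
  by rewrite filter_cat filter_nseq ltnn mul0n cats0; apply/all_filterP.
by rewrite /psi Hu Hc Hcnt Hf !last_cat /=.
Qed.

From Stdlib Require Import Lia.
Ltac tolia := (try apply/leP);
  repeat match goal with
  | H : is_true (leq _ _) |- _ => revert H; move/leP
  | H : @eq nat _ _ |- _ => revert H
  end; rewrite -?minusE -?plusE -?multE; intros; lia.

Lemma sorted_rc p x : sorted leq (rcons p x) = all (fun y => y <= x) p && sorted leq p.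
Proof. by rewrite !(sorted_pairwise leq_trans) pairwise_rcons. Qed.

Lemma sorted_mid p x q : sorted leq (p ++ x :: q) =
  [&& all (fun y => y <= x) p, sorted leq p & path leq x q].
Proof. by rewrite sorted_cat_cons sorted_rc andbA. Qed.

Lemma path_nseq k c d : path leq c (nseq k c ++ [:: d]) = (c <= d).
Proof. by elim: k => [|k /= ->]; rewrite /= ?andbT ?leqnn. Qed.

Lemma shape (s : seq nat) : 0 < size s -> (exists b, s = [:: b]) \/ exists p a b, s = p ++ [:: a; b].
Proof.
case/lastP: s => // u b _; case/lastP: u => [|p a]; first by left; exists b.
by right; exists p, a, b; rewrite -!cats1 -catA.
Qed.

Lemma divE a b : 0 < b -> (a + b) %/ a.+1 = 1 + b.-1 %/ a.+1.
Proof.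
move=> Hb; have -> : a + b = 1 * a.+1 + b.-1 by case: b Hb => // b _; rewrite mul1n addSnnS.
by rewrite divnMDl.
Qed.

Lemma A n s j : is_asc_comp n s -> 0 < j <= F s ->
  [/\ is_asc_comp n (phi (s, j)), 2 <= size (phi (s, j)) & psi (phi (s, j)) = (s, j)].
Proof.
move=> H /andP[Hj HjF]; case/and4P: (H) => Hsz Hpos /eqP Hsum Hsort.
case: (shape Hsz) => [[b Hs]|[p [a [b Hs]]]]; subst s.
- rewrite F1 in HjF; rewrite phi1.
  have Hb : j <= b.-1 by [].
  move: Hsum => /= Hsum; rewrite addn0 in Hsum.
  have Hjb : j < b by move: Hb; case: (b) => [|b'] /=; [case: (j) Hj | rewrite ltnS].
  split.
  + apply/and4P; split.
    * by rewrite size_cat addn1.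
    * rewrite all_cat /= andbT; apply/andP; split; first by elim: (j).
      by rewrite subn_gt0.
    * by rewrite sumn_cat sumn_nseq /= mul1n addn0 subnKC -?Hsum // ltnW.
    * by case: (j) Hj Hjb => // k _ Hk /=; rewrite path_nseq subn_gt0.
  + by rewrite size_cat size_nseq addn1; case: (j) Hj.
  + rewrite (psiE (p:=[::])) //= muln1 subn0 subnK //; exact: ltnW.
- rewrite F2 in HjF; rewrite phi2.
  rewrite all_cat /= andbT in Hpos; case/and3P: Hpos => Hp Ha Hb.
  rewrite sumn_cat /= addn0 in Hsum.
  rewrite sorted_mid /= andbT in Hsort; case/and3P: Hsort => Hpa Hps Hab.
  rewrite leq_divRL // in HjF.
  have Hm : a.+1 <= j * a.+1 by case: (j) Hj => // k _; rewrite mulSn leq_addr.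
  have Hp' : all (fun y => y < a.+1) p by apply: sub_all Hpa.
  have Hb1 : j * a.+1 <= b - 1 by rewrite subn1.
  set m := j * a.+1 in HjF Hm Hb1 *.
  have Hd : a < b + a - m by tolia.
  split.
  + apply/and4P; split.
    * by rewrite !size_cat /= addn1 addnS.
    * rewrite !all_cat Hp /= andbT; apply/andP; split; first by rewrite all_nseq orbT.
      exact: leq_ltn_trans Hd.
    * rewrite !sumn_cat sumn_nseq /= addn0 -Hsum mulnC -/m; apply/eqP.
      tolia.
    * case: (j) Hj => // k _.
      rewrite (_ : nseq k.+1 a.+1 ++ _ = a.+1 :: (nseq k a.+1 ++ [:: b + a - m])) //.
      rewrite sorted_mid Hps path_nseq Hd !andbT.
      by apply: sub_all Hpa => y /= Hy; apply: leqW.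
  + rewrite !size_cat size_nseq /=; tolia.
  + rewrite psiE //= -/m; congr (_ ++ _, _).
    have -> : b + a - m + m - a = b by tolia.
    by case: (a) Ha.
Qed.

Lemma dec (u : seq nat) c : sorted leq u -> all (fun x => x <= c) u ->
  u = filter (fun x => x < c) u ++ nseq (count_mem c u) c.
Proof.
elim: u => // x u IH /=; rewrite (path_sortedE leq_trans) => /andP[Hxu Hsu] /andP[Hxc Huc].
case: ltnP => Hx.
- by rewrite (ltn_eqF Hx) add0n /= -IH.
- have Exc : x = c by apply/eqP; rewrite eqn_leq Hxc Hx.
  subst x; rewrite eqxx /=.
  have Hall : all (pred1 c) u.
    apply/allP => y Hy /=; rewrite eqn_leq (allP Huc y Hy) /=; exact: (allP Hxu y Hy).
  rewrite (all_pred1P _ _ Hall) count_nseq filter_nseq /= eqxx ltnn mul1n mul0n /=.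
  by rewrite add0n.
Qed.

Lemma B n t : is_asc_comp n t -> t != [:: n] ->
  exists s j, [/\ is_asc_comp n s, 0 < j <= F s & phi (s, j) = t].
Proof.
move=> H Hne; case/and4P: H => Hsz Hpos /eqP Hsum Hsort.
case: (shape Hsz) => [[b Hb]|[q [x [d Ht]]]].
  by subst t; move: Hsum Hne => /= <-; rewrite addn0 eqxx.
have Hsort' := Hsort; rewrite Ht sorted_mid /= andbT in Hsort'.
case/and3P: Hsort' => Hqx Hqs Hxd.
set u := rcons q x.
have Hus : sorted leq u by rewrite sorted_rc Hqx.
have Hux : all (fun y => y <= x) u by rewrite /u all_rcons leqnn.
set p := filter (fun y => y < x) u.
set j := count_mem x u.
have Hj : 0 < j.
  rewrite lt0n; apply/negP => /eqP /count_memPn; by rewrite mem_rcons mem_head.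
have Ht' : t = p ++ nseq j x ++ [:: d].
  by rewrite Ht -cat_rcons -/u {1}(dec Hus Hux) catA.
have Hp' : all (fun y => y < x) p by apply: filter_all.
have Hps : sorted leq p by apply: sorted_filter => //; exact: leq_trans.
rewrite Ht' !all_cat all_nseq /= andbT in Hpos; case/and3P: Hpos => Hpp Hxp0 Hdp.
have Hxp : 0 < x by move: Hxp0; rewrite eqn0Ngt Hj.
rewrite Ht' !sumn_cat sumn_nseq /= addn0 mulnC in Hsum.
have [a Ea] : exists a, x = a.+1 by move: Hxp; case: (x) => // a _; exists a.
subst x.
rewrite Ht'.
have [Ea|Ha] := posnP a.
- subst a.
  have Ep : p = [::] by move: Hp' Hpp; case: (p) => // y r /= /andP[Hy _] /andP[Hy' _]; move: Hy Hy'; rewrite ltnS leqn0 => /eqP ->.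
  rewrite Ep in Hsum *; rewrite /= in Hsum.
  exists [:: d + j], j; split.
  + apply/and4P; split => //=.
    * by rewrite andbT addn_gt0 Hdp.
    * by rewrite addn0 -Hsum muln1 addnC.
  + rewrite F1 -subn1 Hj /=; tolia.
  + by rewrite phi1 addnK.
- set b := d + j * a.+1 - a.
  set m := j * a.+1 in Hsum b.
  have Hm : a < m by rewrite /m; case: (j) Hj => // k _; rewrite mulSn leq_addr.
  exists (p ++ [:: a; b]), j; split.
  + apply/and4P; split.
    * by rewrite size_cat addn2.
    * rewrite all_cat Hpp /= Ha andbT /b; tolia.
    * rewrite sumn_cat /= addn0 /b; apply/eqP; tolia.
    * rewrite sorted_mid Hps /= andbT /b; apply/andP; split; last by tolia.
      by apply: sub_all Hp' => y; rewrite ltnS.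
  + rewrite F2 Hj /= leq_divRL // -subn1 -/m /b; tolia.
  + rewrite phi2 -/m; congr (_ ++ _ ++ [:: _]); rewrite /b; tolia.
Qed.

Lemma summandE n s : is_asc_comp n s -> summand s = 1 + F s.
Proof.
case/and4P => Hsz Hpos _ _; rewrite /summand /F divE //.
rewrite /last_part; case: s Hsz Hpos => // x s _ Hpos.
exact: (allP Hpos _ (mem_last x s)).
Qed.

Theorem mainTheorem1 (n : nat) (l : seq (seq nat)) :
  1 <= n -> uniq l -> (forall s, (s \in l) = is_asc_comp n s) ->
  2 * size l - 1 = \sum_(s <- l) summand s.
Proof.
move=> Hn Hu Hl.
have Hsum : \sum_(s <- l) summand s = size l + sumn (map F l).
  rewrite (eq_big_seq (fun s => 1 + F s)); last by move=> s; rewrite Hl => /summandE.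
  by rewrite big_split /= sum1_size sumnE big_map.
set D := [seq (s, j) | s <- l, j <- iota 1 (F s)].
have HD : size D = sumn (map F l).
  rewrite /D size_allpairs_dep; congr sumn; apply: eq_map => s; exact: size_iota.
have HmD : forall s j, ((s, j) \in D) = (s \in l) && (0 < j <= F s).
  move=> s j; apply/allpairsPdep/andP.
  - by case=> x [y [Hx Hy [-> ->]]]; rewrite mem_iota add1n ltnS in Hy.
  - by case=> Hs Hj; exists s, j; rewrite mem_iota add1n ltnS.
have HuD : uniq D.
  apply: allpairs_uniq_dep => //; first by move=> s _; exact: iota_uniq.
  by move=> [x y] [x' y'] _ _ /= [-> ->].
have Hcan : {in D, cancel phi psi}.
  move=> [s j]; rewrite HmD Hl => /andP[Hs Hj]; by case: (A Hs Hj).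
have Hperm : perm_eq (map phi D) (filter (predC1 [:: n]) l).
  apply: uniq_perm.
  - by rewrite (map_inj_in_uniq (can_in_inj Hcan)).
  - exact: filter_uniq.
  - move=> t; rewrite mem_filter /=; apply/mapP/andP.
    + case=> [[s j]]; rewrite HmD Hl => /andP[Hs Hj] ->.
      case: (A Hs Hj) => Ha Hsz _; split; last by rewrite Hl.
      by apply/eqP => E; rewrite E in Hsz.
    + case=> Hne; rewrite Hl => Ht; case: (B Ht Hne) => s [j [Hs Hj Hphi]].
      by exists (s, j); rewrite // HmD Hl Hs.
have Hin : [:: n] \in l by rewrite Hl /is_asc_comp /= addn0 eqxx Hn.
have Hcnt : size (filter (predC1 [:: n]) l) = (size l).-1.
  rewrite size_filter -(count_predC (pred1 [:: n]) l) count_uniq_mem // Hin.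
  by rewrite add1n.
have := perm_size Hperm; rewrite size_map HD Hcnt Hsum => ->.
have : 0 < size l by case: (l) Hin.
by case: (size l) => // k _; rewrite mul2n -addnn; tolia.
Qed.
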